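(* The variety $\mathbf{K}_2$ is not locally finite; in fact its free algebra on one generator is infinite.
   Context: A pseudocomplemented de Morgan algebra is $(L;\wedge,\vee,{}^\ast,{}^\prime,0,1)$ with bounded distributive lattice reduct, pseudocomplement ${}^\ast$ and de Morgan involution ${}^\prime$. With $x^{0(\prime\ast)}=x$, $x^{(k+1)(\prime\ast)}=((x^{k(\prime\ast)})')^\ast$, $\mathbf{K}_2$ is the variety of such algebras satisfying $x\wedge x^{\prime\ast\prime}\le y\vee y^\ast$ (regularity), $x\wedge x'\le y\vee y'$ (Kleene), and $(x\wedge x^{\prime\ast})^{2(\prime\ast)}=(x\wedge x^{\prime\ast})^{3(\prime\ast)}$ (range $2$). *)

(* Defs.v *)
From Stdlib Require Import Arith.

Record PDMStruct := {
  car   : Type;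
  meet  : car -> car -> car;
  join  : car -> car -> car;
  star  : car -> car;
  prim  : car -> car;
  bot   : car;
  top   : car
}.

Definition le (A : PDMStruct) (x y : car A) : Prop := meet A x y = x.

Definition is_bdl (A : PDMStruct) : Prop :=
  (forall x y z, meet A x (meet A y z) = meet A (meet A x y) z) /\
  (forall x y z, join A x (join A y z) = join A (join A x y) z) /\
  (forall x y, meet A x y = meet A y x) /\
  (forall x y, join A x y = join A y x) /\
  (forall x y, meet A x (join A x y) = x) /\
  (forall x y, join A x (meet A x y) = x) /\
  (forall x y z, meet A x (join A y z) = join A (meet A x y) (meet A x z)) /\
  (forall x, join A x (bot A) = x) /\
  (forall x, meet A x (top A) = x).

Definition is_pseudocomplement (A : PDMStruct) : Prop :=
  forall x y, meet A x y = bot A <-> le A y (star A x).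

Definition is_demorgan (A : PDMStruct) : Prop :=
  (forall x, prim A (prim A x) = x) /\
  (forall x y, prim A (join A x y) = meet A (prim A x) (prim A y)) /\
  (forall x y, prim A (meet A x y) = join A (prim A x) (prim A y)).

Definition is_PDM (A : PDMStruct) : Prop :=
  is_bdl A /\ is_pseudocomplement A /\ is_demorgan A.

(* x^{k('* )}: x^{0('* )} = x, x^{(k+1)('* )} = ((x^{k('* )})')^* *)
Fixpoint iter_ps (A : PDMStruct) (k : nat) (x : car A) : car A :=
  match k with
  | O => x
  | S k' => star A (prim A (iter_ps A k' x))
  end.

Definition in_K2 (A : PDMStruct) : Prop :=
  is_PDM A /\
  (forall x y, le A (meet A x (prim A (star A (prim A x)))) (join A y (star A y))) /\
  (forall x y, le A (meet A x (prim A x)) (join A y (prim A y))) /\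
  (forall x, iter_ps A 2 (meet A x (star A (prim A x)))
             = iter_ps A 3 (meet A x (star A (prim A x)))).

Inductive term1 : Type :=
  | tVar  : term1
  | tBot  : term1
  | tTop  : term1
  | tMeet : term1 -> term1 -> term1
  | tJoin : term1 -> term1 -> term1
  | tStar : term1 -> term1
  | tPrim : term1 -> term1.

Fixpoint eval (A : PDMStruct) (a : car A) (t : term1) : car A :=
  match t with
  | tVar => a
  | tBot => bot A
  | tTop => top A
  | tMeet t1 t2 => meet A (eval A a t1) (eval A a t2)
  | tJoin t1 t2 => join A (eval A a t1) (eval A a t2)
  | tStar t1 => star A (eval A a t1)
  | tPrim t1 => prim A (eval A a t1)
  end.

(* Two unary terms are equal in the free K_2-algebra on one generator
   iff the identity t1 = t2 holds in every K_2-algebra. *)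
Definition K2_equiv (t1 t2 : term1) : Prop :=
  forall (A : PDMStruct), in_K2 A -> forall a : car A, eval A a t1 = eval A a t2.

(* Main.v *)
Require Import Defs.
From Stdlib Require Import Arith Lia Classical FunctionalExtensionality PropExtensionality ProofIrrelevance.

Definition adj (i j : nat) : Prop := i = 0 \/ j = 0 \/ i = j \/ i = S j \/ j = S i.

Lemma adj_refl j : adj j j. Proof. unfold adj; lia. Qed.
Lemma adj_sym i j : adj i j -> adj j i. Proof. unfold adj; lia. Qed.
Lemma adj_0l j : adj 0 j. Proof. unfold adj; lia. Qed.
Lemma adj_0r j : adj j 0. Proof. unfold adj; lia. Qed.

Record el := mk { ex : nat -> Prop; ey : nat -> Prop;
  edown : forall j, ey j -> forall i, adj i j -> ex i }.

Definition EE (P : nat -> Prop) (j : nat) : Prop := forall i, adj i j -> ~ P i.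
Definition Dm (P : nat -> Prop) (j : nat) : Prop := forall i, adj i j -> P i.

Definition emeet (u v : el) : el.
Proof.
  refine (mk (fun i => ex u i /\ ex v i) (fun j => ey u j /\ ey v j) _).
  intros j [H1 H2] i Ha; split; eapply edown; eauto.
Defined.
Definition ejoin (u v : el) : el.
Proof.
  refine (mk (fun i => ex u i \/ ex v i) (fun j => ey u j \/ ey v j) _).
  intros j [H|H] i Ha; [left|right]; eapply edown; eauto.
Defined.
Definition eprim (u : el) : el.
Proof.
  refine (mk (fun i => ~ ey u i) (fun j => ~ ex u j) _).
  intros j Hj i Ha Hi; apply Hj; eapply edown; eauto using adj_sym.
Defined.
Definition estar (u : el) : el.
Proof.
  refine (mk (fun i => ~ ex u i) (EE (ex u)) _).
  intros j Hj i Ha; apply Hj; auto.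
Defined.
Definition ebot : el := mk (fun _ => False) (fun _ => False) (fun j H => False_ind _ H).
Definition etop : el := mk (fun _ => True) (fun _ => True) (fun _ _ _ _ => I).

Definition Fan : PDMStruct :=
  {| car := el; meet := emeet; join := ejoin; star := estar; prim := eprim;
     bot := ebot; top := etop |}.

Lemma el_ext (u v : el) : (forall i, ex u i <-> ex v i) -> (forall j, ey u j <-> ey v j) -> u = v.
Proof.
  destruct u as [x y d], v as [x' y' d']; simpl; intros H1 H2.
  assert (x = x') by (apply functional_extensionality; intro; apply propositional_extensionality; auto).
  assert (y = y') by (apply functional_extensionality; intro; apply propositional_extensionality; auto).
  subst. f_equal. apply proof_irrelevance.
Qed.

Lemma el_pt (u v : el) : u = v -> (forall i, ex u i <-> ex v i) /\ (forall j, ey u j <-> ey v j).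
Proof. intros ->; split; tauto. Qed.

Lemma ey_ex (u : el) j : ey u j -> ex u j.
Proof. intro H; eapply edown; eauto using adj_refl. Qed.

Lemma Fan_PDM : is_PDM Fan.
Proof.
  split; [|split].
  - repeat split; intros; apply el_ext; simpl; intros; tauto.
  - intros x y; unfold le; simpl; split.
    + intro H; apply el_pt in H; destruct H as [H1 H2]; simpl in *.
      apply el_ext; simpl; intros k; (split; [tauto| intro Hy; split; auto]).
      * intro Hx; apply (H1 k); tauto.
      * intros i Ha Hx. apply (H1 i). split; auto. eapply edown; eauto.
    + intro H; apply el_pt in H; destruct H as [H1 H2]; simpl in *.
      apply el_ext; simpl; intros k; (split; try tauto).
      * intros [Hx Hy]. apply H1 in Hy. tauto.
      * intros [Hx Hy]. apply ey_ex in Hx. apply ey_ex in Hy. apply H1 in Hy. tauto.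
  - split; [|split]; intros; apply el_ext; simpl; intros.
    + split; [apply NNPP| tauto].
    + split; [apply NNPP| tauto].
    + tauto.
    + tauto.
    + split; [|tauto]. intro H. destruct (classic (ey x i)); tauto.
    + split; [|tauto]. intro H. destruct (classic (ex x j)); tauto.
Qed.

Definition sim (u : el) (P Q : nat -> Prop) :=
  (forall i, ex u i <-> P i) /\ (forall j, ey u j <-> Q j).

Lemma sim_self u : sim u (ex u) (ey u). Proof. split; tauto. Qed.
Lemma sim_w u P Q P' Q' : sim u P Q -> (forall i, P i <-> P' i) -> (forall j, Q j <-> Q' j) -> sim u P' Q'.
Proof. intros [H1 H2] H3 H4; split; intros; rewrite ?H1, ?H2; auto. Qed.
Lemma sim_prim u P Q : sim u P Q -> sim (eprim u) (fun i => ~ Q i) (fun j => ~ P j).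
Proof. intros [H1 H2]; split; intros; simpl; rewrite ?H1, ?H2; tauto. Qed.
Lemma sim_star u P Q : sim u P Q -> sim (estar u) (fun i => ~ P i) (EE P).
Proof. intros [H1 H2]; split; intros; simpl; unfold EE in *.
  - rewrite H1; tauto.
  - split; intros H i Ha; specialize (H i Ha); rewrite ?H1 in *; auto. Qed.
Lemma sim_meet u v P Q P' Q' : sim u P Q -> sim v P' Q' ->
  sim (emeet u v) (fun i => P i /\ P' i) (fun j => Q j /\ Q' j).
Proof. intros [H1 H2] [H3 H4]; split; intros; simpl; rewrite ?H1, ?H2, ?H3, ?H4; tauto. Qed.
Lemma sim_join u v P Q P' Q' : sim u P Q -> sim v P' Q' ->
  sim (ejoin u v) (fun i => P i \/ P' i) (fun j => Q j \/ Q' j).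
Proof. intros [H1 H2] [H3 H4]; split; intros; simpl; rewrite ?H1, ?H2, ?H3, ?H4; tauto. Qed.
Lemma sim_eq u v P Q : sim u P Q -> sim v P Q -> u = v.
Proof. intros [H1 H2] [H3 H4]; apply el_ext; intros; rewrite ?H1, ?H2, ?H3, ?H4; tauto. Qed.

Lemma EE_neg P j : EE (fun i => ~ P i) j <-> Dm P j.
Proof. unfold EE, Dm; split; intros H i Ha; specialize (H i Ha); [apply NNPP|]; auto. Qed.

Lemma sim_sp u P Q : sim u P Q -> sim (estar (eprim u)) Q (Dm Q).
Proof. intro H. pose proof (sim_star _ _ _ (sim_prim _ _ _ H)) as H'. eapply sim_w; [exact H'| |].
  - intro; split; [apply NNPP|tauto].
  - intro; apply EE_neg. Qed.

Lemma Dm_0 W : Dm W 0 <-> forall k, W k.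
Proof. unfold Dm; split; auto using adj_0r. Qed.
Lemma Dm_W0 W j : Dm W j -> W 0.
Proof. intro H; apply H, adj_0l. Qed.
Lemma Dm_all W j : (forall k, W k) -> Dm W j.
Proof. intros H i _; auto. Qed.

Lemma Fan_K2 : in_K2 Fan.
Proof.
  split; [apply Fan_PDM|split; [|split]].
  - intros x y; unfold le; apply el_ext; simpl; intros k; [|tauto].
    destruct (classic (ex y k)); tauto.
  - intros x y; unfold le; apply el_ext; simpl; intros k.
    + split; [tauto|]. intros [Hx Hy]; split; auto.
      destruct (classic (ey y k)) as [H|H]; [left; apply ey_ex; auto| right; auto].
    + split; [tauto|]. intros [Hx Hy]. exfalso; apply Hy, ey_ex, Hx.
  - intro x.
    set (u := emeet x (estar (eprim x))).
    assert (Hu : sim u (ex u) (fun k => ey x k /\ Dm (ey x) k)).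
    { eapply sim_w. apply (sim_meet _ _ _ _ _ _ (sim_self x) (sim_sp _ _ _ (sim_self x))).
      - intro; subst u; simpl; tauto.
      - intro; tauto. }
    set (C := forall k, ey x k /\ Dm (ey x) k).
    assert (HD1 : forall i, Dm (fun k => ey x k /\ Dm (ey x) k) i <-> C).
    { intro i; split.
      - intro H. pose proof (Dm_W0 _ _ H) as [_ H0]. pose proof (proj1 (Dm_0 _) H0) as H1.
        intro k; split; auto. apply Dm_all; auto.
      - intro H; apply Dm_all; auto. }
    assert (HD2 : forall i, Dm (Dm (fun k => ey x k /\ Dm (ey x) k)) i <-> C).
    { intro i; split.
      - intro H. exact (proj1 (HD1 0) (Dm_W0 _ _ H)).
      - intro H; apply Dm_all; intro; apply HD1; auto. }
    assert (HD3 : forall i, Dm (Dm (Dm (fun k => ey x k /\ Dm (ey x) k))) i <-> C).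
    { intro i; split.
      - intro H. exact (proj1 (HD2 0) (Dm_W0 _ _ H)).
      - intro H; apply Dm_all; intro; apply HD2; auto. }
    pose proof (sim_sp _ _ _ (sim_sp _ _ _ Hu)) as H2.
    pose proof (sim_sp _ _ _ H2) as H3.
    apply (sim_eq _ _ (fun _ => C) (fun _ => C)).
    + exact (sim_w _ _ _ _ _ H2 HD1 HD2).
    + exact (sim_w _ _ _ _ _ H3 HD2 HD3).
Qed.

Definition a0 : el := mk (fun i => i = 2) (fun _ => False) (fun j H => False_ind _ H).

Definition tas := tStar tVar.
Definition tasp := tPrim tas.
Definition tasps := tStar tasp.
Definition taspss := tStar tasps.
Definition taspssp := tPrim taspss.
Definition taspsspsp := tPrim (tStar taspssp).
Definition tK := tJoin (tJoin tasps tVar) taspssp.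
Definition tKss := tStar (tStar tK).
Definition tc := tMeet (tPrim (tStar (tPrim tKss))) taspsspsp.
Definition t0 := tJoin tas tc.
Definition th (t : term1) := tJoin (tStar (tPrim t)) tc.
Fixpoint tn (n : nat) : term1 := match n with O => t0 | S m => th (tn m) end.

Notation ev t := (eval Fan a0 t).

Lemma s_a : sim (ev tVar) (fun i => i = 2) (fun _ => False).
Proof. split; simpl; tauto. Qed.

Ltac wk H := eapply sim_w; [exact H| |]; intro; simpl; unfold EE.

Lemma s_as : sim (ev tas) (fun i => i <> 2) (fun j => 4 <= j).
Proof. pose proof (sim_star _ _ _ s_a) as H. wk H; [tauto|].
  split.
  - intro Hk. destruct (le_lt_dec 4 j) as [l|l]; auto. exfalso. apply (Hk 2); auto. unfold adj; lia.
  - intros Hj i Ha Hi; unfold adj in Ha; lia. Qed.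

Lemma s_asp : sim (ev tasp) (fun i => i <= 3) (fun j => j = 2).
Proof. pose proof (sim_prim _ _ _ s_as) as H. wk H; lia. Qed.

Lemma s_asps : sim (ev tasps) (fun i => 4 <= i) (fun _ => False).
Proof. pose proof (sim_star _ _ _ s_asp) as H. wk H; [lia|].
  split; [|tauto]. intro Hk; apply (Hk 0); [apply adj_0l|lia]. Qed.

Lemma s_aspss : sim (ev taspss) (fun i => i <= 3) (fun j => j = 1 \/ j = 2).
Proof. pose proof (sim_star _ _ _ s_asps) as H. wk H; [lia|].
  split.
  - intro Hk. destruct (Nat.eq_dec j 0) as [->|n0].
    + exfalso; apply (Hk 4); [apply adj_0r|lia].
    + destruct (le_lt_dec j 2) as [l|l]; [lia|].
      exfalso; apply (Hk (S j)); [unfold adj; lia|lia].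
  - intros Hj i Ha Hi; unfold adj in Ha; lia. Qed.

Lemma s_aspssp : sim (ev taspssp) (fun i => i <> 1 /\ i <> 2) (fun j => 4 <= j).
Proof. pose proof (sim_prim _ _ _ s_aspss) as H. wk H; lia. Qed.

Lemma s_aspsspsp : sim (ev taspsspsp) (fun _ => True) (fun j => j <> 1 /\ j <> 2).
Proof. pose proof (sim_prim _ _ _ (sim_star _ _ _ s_aspssp)) as H. wk H.
  - split; [tauto|]. intros _ Hk. apply (Hk 0); [apply adj_0l|lia].
  - lia. Qed.

Lemma s_K : sim (ev tK) (fun i => i <> 1) (fun j => 4 <= j).
Proof. pose proof (sim_join _ _ _ _ _ _ (sim_join _ _ _ _ _ _ s_asps s_a) s_aspssp) as H.
  wk H; lia. Qed.

Lemma s_Kss : sim (ev tKss) (fun i => i <> 1) (fun j => 3 <= j).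
Proof. pose proof (sim_star _ _ _ s_K) as H.
  assert (H' : sim (estar (ev tK)) (fun i => i = 1) (fun _ => False)).
  { wk H; [lia|]. split; [|tauto]. intro Hk. apply (Hk 0); [apply adj_0l|lia]. }
  pose proof (sim_star _ _ _ H') as H2. wk H2; [lia|].
  split.
  - intro Hk. destruct (le_lt_dec 3 j) as [l|l]; auto. exfalso. apply (Hk 1); auto. unfold adj; lia.
  - intros Hj i Ha Hi; unfold adj in Ha; lia. Qed.

Lemma s_c : sim (ev tc) (fun _ => True) (fun j => j = 0).
Proof.
  pose proof (sim_prim _ _ _ s_Kss) as H1.
  assert (H2 : sim (ev (tStar (tPrim tKss))) (fun i => 3 <= i) (fun _ => False)).
  { pose proof (sim_star _ _ _ H1) as H. wk H; [lia|]. split; [|tauto].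
    intro Hk; apply (Hk 0); [apply adj_0l|lia]. }
  pose proof (sim_meet _ _ _ _ _ _ (sim_prim _ _ _ H2) s_aspsspsp) as H. wk H; lia. Qed.

Lemma s_tn n : sim (ev (tn n)) (fun _ => True) (fun j => j = 0 \/ n + 4 <= j).
Proof.
  induction n as [|n IH].
  - pose proof (sim_join _ _ _ _ _ _ s_as s_c) as H. wk H; lia.
  - pose proof (sim_star _ _ _ (sim_prim _ _ _ IH)) as H.
    pose proof (sim_join _ _ _ _ _ _ H s_c) as H'. wk H'; [tauto|].
    split.
    + intros [Hk| ->]; [|auto]. right.
      destruct (le_lt_dec (S n + 4) j) as [l|l]; auto. exfalso.
      destruct (le_lt_dec j 1) as [l1|l1].
      * apply (Hk 1); [unfold adj; lia|lia].
      * apply (Hk (j - 1)); [unfold adj; lia|lia].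
    + intros [->|Hj]; [right; auto|left]. intros i Ha Hi. apply Hi. unfold adj in Ha; lia.
Qed.

Theorem theorem4p14 :
  exists f : nat -> term1, forall i j : nat, i <> j -> ~ K2_equiv (f i) (f j).
Proof.
  exists tn. intros i j Hij Heq.
  specialize (Heq Fan Fan_K2 a0).
  assert (forall k, (k = 0 \/ i + 4 <= k) <-> (k = 0 \/ j + 4 <= k)) as Hk.
  { intro k. destruct (s_tn i) as [_ Hi]. destruct (s_tn j) as [_ Hj].
    rewrite <- Hi, <- Hj. change (eval Fan a0 (tn i)) with (ev (tn i)) in Heq. rewrite Heq. tauto. }
  destruct (le_lt_dec i j).
  - specialize (Hk (i + 4)). lia.
  - specialize (Hk (j + 4)). lia.
Qed.
Print Assumptions theorem4p14.
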